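(* Let $d\ge1$ and for $k=1,2$ let $(\boldsymbol X_k,Y_k)=(X_{k,1},\ldots,X_{k,d},Y_k)$ be a random vector with continuous marginals and $(d+1)$-dimensional copula $C_k$. Fix $\boldsymbol{\alpha}\in[0,1)^d$ with $C_k(\boldsymbol\alpha,1)<1$ for $k=1,2$, and set $l_{\boldsymbol\alpha}(v)=\dfrac{v-C_1(\boldsymbol\alpha,v)}{v-C_2(\boldsymbol\alpha,v)}$. If $Y_1\le_{\rm st}Y_2$ and $l_{\boldsymbol\alpha}(v)\ge l_{\boldsymbol\alpha}(1)$ for all $v\in(0,1]$, then $$\mathrm{VCoVaR}_{\boldsymbol\alpha,\beta}(Y_1|\boldsymbol X_1)\le \mathrm{VCoVaR}_{\boldsymbol\alpha,\beta}(Y_2|\boldsymbol X_2)\quad\text{for all }\beta\in(0,1).$$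
   Context: $C(\boldsymbol{\alpha},v)=C(\alpha_1,\ldots,\alpha_d,v)$. For a distribution function $F$, $F^{-1}(t)=\inf\{x:F(x)\ge t\}$, $\mathrm{VaR}_t(Z)=F_Z^{-1}(t)$. $\mathrm{VCoVaR}_{\boldsymbol\alpha,\beta}(Y_k|\boldsymbol X_k)$ is the $\beta$-quantile of the conditional distribution of $Y_k$ given $\{\exists\, i: X_{k,i}>\mathrm{VaR}_{\alpha_i}(X_{k,i})\}$. $Y_1\le_{\rm st}Y_2$ (usual stochastic order) means $P(Y_1>x)\le P(Y_2>x)$ for all $x\in\mathbb{R}$. *)

(* Defs.v *)
From HB Require Import structures.
From mathcomp Require Import all_boot all_order all_algebra.
From mathcomp Require Import all_classical all_reals all_analysis.
Set Implicit Arguments. Unset Strict Implicit. Unset Printing Implicit Defensive.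
Import Order.TTheory GRing.Theory Num.Theory.
Import numFieldNormedType.Exports.
Local Open Scope classical_set_scope.
Local Open Scope ring_scope.

Section Defs.
Context {R : realType}.

(* generalized inverse F^{-1}(t) = inf {x : F x >= t}, valued in \bar R
   (so that e.g. F^{-1}(0) = -oo) *)
Definition ginv (F : R -> R) (t : R) : \bar R :=
  ereal_inf [set x%:E | x in [set x : R | t <= F x]].

Context {dT : measure_display} {T : measurableType dT}.

Definition cdf (P : probability T R) (Z : T -> R) (x : R) : R :=
  fine (P [set t | Z t <= x]).

Definition VaR (P : probability T R) (Z : T -> R) (t : R) : \bar R :=
  ginv (cdf P Z) t.

Definition VEvent {d : nat} (P : probability T R) (X : 'I_d -> T -> R)
  (alpha : 'I_d -> R) : set T :=
  [set t | exists i : 'I_d, (VaR P (X i) (alpha i) < (X i t)%:E)%E].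

Definition cond_cdf (P : probability T R) (A : set T) (Y : T -> R) (y : R) : R :=
  fine (P (A `&` [set t | Y t <= y])) / fine (P A).

Definition VCoVaR {d : nat} (P : probability T R) (X : 'I_d -> T -> R)
  (Y : T -> R) (alpha : 'I_d -> R) (beta : R) : \bar R :=
  ginv (cond_cdf P (VEvent P X alpha) Y) beta.

End Defs.

Section Copula.
Context {R : realType} {d : nat}.

(* A (d+1)-dimensional function written C(u, v) with u in [0,1]^d, v in [0,1] *)
Definition in01 (x : R) := 0 <= x <= 1.

Definition vertex (a b : 'I_d -> R) (S : {set 'I_d}) : 'I_d -> R :=
  fun i => if i \in S then b i else a i.

Definition cvolume (C : ('I_d -> R) -> R -> R) (a b : 'I_d -> R) (a' b' : R) : R :=
  \sum_(S : {set 'I_d})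
     (-1) ^+ #|~: S| * (C (vertex a b S) b' - C (vertex a b S) a').

Definition is_copula (C : ('I_d -> R) -> R -> R) : Prop :=
  [/\ (forall u v, (forall i, in01 (u i)) -> in01 v ->
         (exists i, u i = 0) \/ v = 0 -> C u v = 0),
      (forall v, in01 v -> C (fun _ => 1) v = v),
      (forall (j : 'I_d) (w : R), in01 w ->
         C (fun i => if i == j then w else 1) 1 = w) &
      (forall (a b : 'I_d -> R) (a' b' : R),
         (forall i, in01 (a i) /\ in01 (b i) /\ a i <= b i) ->
         in01 a' -> in01 b' -> a' <= b' -> 0 <= cvolume C a b a' b')].
End Copula.

Section RandomVector.
Context {R : realType} {dT : measure_display} {T : measurableType dT}.

Definition rv_cont_copula {d : nat} (P : probability T R)
  (X : 'I_d -> T -> R) (Y : T -> R) (C : ('I_d -> R) -> R -> R) : Prop :=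
  [/\ (forall i, measurable_fun setT (X i)) /\ measurable_fun setT Y,
      (forall i, continuous (cdf P (X i))),
      continuous (cdf P Y),
      is_copula C &
      (forall (x : 'I_d -> R) (y : R),
         P [set t | (forall i, X i t <= x i) /\ Y t <= y] =
         (C (fun i => cdf P (X i) (x i)) (cdf P Y y))%:E)].

End RandomVector.

Definition st_le {R : realType} {d1 d2 : measure_display}
  {T1 : measurableType d1} {T2 : measurableType d2}
  (P1 : probability T1 R) (Y1 : T1 -> R)
  (P2 : probability T2 R) (Y2 : T2 -> R) : Prop :=
  forall x : R, (P1 [set t | (x < Y1 t)%R] <= P2 [set t | (x < Y2 t)%R])%E.

(* Main.v *)
Require Import Defs.
From HB Require Import structures.
From mathcomp Require Import all_boot all_order all_algebra.
From mathcomp Require Import all_classical all_reals all_analysis.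
From mathcomp Require Import lra.
Import Order.TTheory GRing.Theory Num.Theory.
Import numFieldNormedType.Exports.
Local Open Scope classical_set_scope.
Local Open Scope ring_scope.



Lemma nbhs_R (R : realType) (q : R) (Q : R -> Prop) : nbhs q Q ->
  exists2 e : R, 0 < e & forall t, `|q - t| < e -> Q t.
Proof.
move=> /nbhs_ballP [e e0 He]; exists e => // t h; apply: He; by rewrite /ball /=.
Qed.

Section Prob.
Context {R : realType} {dT : measure_display} {T : measurableType dT}
  (P : probability T R).

Lemma PrE (A : set T) : measurable A -> P A = (fine (P A))%:E.
Proof. by move=> mA; rewrite fineK// fin_num_measure. Qed.

Lemma Pr_ge0 (A : set T) : 0 <= fine (P A).
Proof. exact/fine_ge0/measure_ge0. Qed.

Lemma Pr_le1 (A : set T) : measurable A -> fine (P A) <= 1.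
Proof.
move=> mA; rewrite -lee_fin -PrE//; exact: probability_le1.
Qed.

Lemma Pr_le (A B : set T) : measurable A -> measurable B -> A `<=` B ->
  fine (P A) <= fine (P B).
Proof.
move=> mA mB AB; rewrite -lee_fin -!PrE//; apply: le_measure => //; by rewrite inE.
Qed.

Lemma PrDI (A B : set T) : measurable A -> measurable B ->
  fine (P A) = fine (P (A `\` B)) + fine (P (A `&` B)).
Proof.
move=> mA mB; have mD := measurableD mA mB; have mI := measurableI _ _ mA mB.
apply/EFin_inj; rewrite EFinD -!PrE//.
exact: measureDI.
Qed.

Lemma PrC (A : set T) : measurable A -> fine (P (~` A)) = 1 - fine (P A).
Proof.
move=> mA; apply/EFin_inj; rewrite -PrE; last exact: measurableC.
by rewrite probability_setC// EFinB -PrE.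
Qed.

Lemma meas_le (Y : T -> R) y : measurable_fun setT Y ->
  measurable [set t | Y t <= y].
Proof.
move=> mY; have -> : [set t | Y t <= y] = setT `&` Y @^-1` `]-oo, y].
  by apply/seteqP; split => t /=; rewrite in_itv /= ?andbT; [move=> h; split|case].
apply: mY => //; exact: measurable_itv.
Qed.

Lemma meas_gt (Y : T -> R) y : measurable_fun setT Y ->
  measurable [set t | y < Y t].
Proof.
move=> mY; have -> : [set t | y < Y t] = setT `&` Y @^-1` `]y, +oo[.
  by apply/seteqP; split => t /=; rewrite in_itv /= ?andbT; [move=> h; split|case].
apply: mY => //; exact: measurable_itv.
Qed.

Lemma cdf_ge0' (Y : T -> R) y : 0 <= Defs.cdf P Y y.
Proof. exact: Pr_ge0. Qed.

Lemma cdf_le1' (Y : T -> R) y : measurable_fun setT Y -> Defs.cdf P Y y <= 1.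
Proof. by move=> mY; apply: Pr_le1; exact: meas_le. Qed.

Lemma cdf_mono (Y : T -> R) : measurable_fun setT Y ->
  {homo Defs.cdf P Y : x y / x <= y}.
Proof.
move=> mY x y xy; apply: Pr_le; try exact: meas_le.
by move=> t /= /le_trans; apply.
Qed.

Lemma cdf_lim (Y : T -> R) : measurable_fun setT Y ->
  (forall a, 0 < a -> exists x, Defs.cdf P Y x < a) /\
  (forall a, a < 1 -> exists x, a < Defs.cdf P Y x).
Proof.
move=> mY.
pose X : {RV P >-> R} := HB.pack Y (@isMeasurableFun.Build _ _ T R Y mY).
have E : forall x, fine (random_variable.cdf X x) = Defs.cdf P Y x.
  move=> x; rewrite /random_variable.cdf /distribution /= /pushforward /Defs.cdf.
  congr (fine (P _)); apply/seteqP; split => t /=; by rewrite in_itv.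
split.
- move=> a a0.
  have /(cvgr_lt 0) : (fine \o random_variable.cdf X) x @[x --> -oo] --> (0:R).
    exact/fine_cvg/cvg_cdfNy0.
  move=> /(_ a a0) [M [_ HM]]; exists (M - 1).
  rewrite -E; apply: (HM (M - 1)); rewrite ltrBlDr ltrDl; exact: ltr01.
- move=> a a1.
  have /(cvgr_gt 1) : (fine \o random_variable.cdf X) x @[x --> +oo] --> (1:R).
    exact/fine_cvg/cvg_cdfy1.
  move=> /(_ a a1) [M [_ HM]]; exists (M + 1).
  rewrite -E; apply: (HM (M + 1)); rewrite ltrDl; exact: ltr01.
Qed.


Lemma VaR0 (Z : T -> R) : VaR P Z 0 = -oo%E.
Proof.
rewrite /VaR /ginv.
have H : forall r : R, (ereal_inf [set x%:E | x in [set x : R | (0 <= Defs.cdf P Z x)%R]] <= r%:E)%E.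
  move=> r; apply: ge_ereal_inf; exists r%:E => //; exists r => //; exact: cdf_ge0'.
move: H; case: (ereal_inf _) => [r|//|//] H.
- have := H (r - 1); rewrite lee_fin => h.
  have : r - 1 < r by rewrite ltrBlDr ltrDl ltr01.
  by rewrite ltNge h.
- by have := H 0.
Qed.

Lemma VaR_fin (Z : T -> R) (a : R) : measurable_fun setT Z ->
  continuous (Defs.cdf P Z) -> 0 < a < 1 ->
  exists q, VaR P Z a = q%:E /\ Defs.cdf P Z q = a.
Proof.
move=> mZ cF /andP[a0 a1].
set F := Defs.cdf P Z.
have [lim0 lim1] := cdf_lim Z mZ.
pose S := [set x : R | a <= F x].
have S0 : S !=set0.
  by have [x ax] := lim1 a a1; exists x; rewrite /S /= ltW.
have Slb : has_lbound S.
  have [x0 Fx0] := lim0 a a0; exists x0 => x Sx.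
  rewrite leNgt; apply/negP => xx0.
  have := cdf_mono Z mZ _ _ (ltW xx0); rewrite -/F => Fle.
  by move: Sx; rewrite /S /= leNgt (le_lt_trans Fle Fx0).
have hinf : has_inf S by split.
exists (inf S); split.
  by rewrite /VaR /ginv ereal_inf_EFin.
set q := inf S.
have qlb := ge_inf Slb; rewrite -/q in qlb.
have cq : F x @[x --> q] --> F q by exact: cF.
case: (ltgtP (F q) a) => // Fqa.
- have : nbhs q (fun t => F t < a) := cvgr_lt _ cq _ Fqa.
  move=> HH; have {HH} := HH ltac:(exact: nbhs_filter) => /nbhs_R[e e0 He].
  have [x Sx xq] := inf_adherent e0 hinf; rewrite -/q in xq.
  have qx := qlb x Sx.
  have : F x < a.
    apply: He; rewrite distrC ger0_norm ?subr_ge0//.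
    by rewrite ltrBlDl.
  by rewrite ltNge Sx.
- have : nbhs q (fun t => a < F t) := cvgr_gt _ cq _ Fqa.
  move=> HH; have {HH} := HH ltac:(exact: nbhs_filter) => /nbhs_R[e e0 He].
  have : a < F (q - e / 2).
    apply: He; rewrite opprB addrC subrK ger0_norm ?divr_ge0 ?ltW//.
    by rewrite ltr_pdivrMr// ltr_pMr// ltr1n.
  move=> /ltW Sx; have := qlb _ Sx.
  by rewrite lerBrDr gerDl leNgt divr_gt0.
Qed.


Lemma P_gt (Y : T -> R) y : measurable_fun setT Y ->
  P [set t | y < Y t] = (1 - Defs.cdf P Y y)%:E.
Proof.
move=> mY.
have -> : [set t | y < Y t] = ~` [set t | Y t <= y].
  by apply/seteqP; split => t /=; rewrite ltNge => /negP.
rewrite PrE; last exact/measurableC/meas_le.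
by rewrite PrC //; exact: meas_le.
Qed.

End Prob.



Section CopulaLemmas.
Context {R : realType} {d : nat} (C : ('I_d -> R) -> R -> R).
Hypothesis hC : is_copula C.

Definition upd (u : 'I_d -> R) (j : 'I_d) (s : R) : 'I_d -> R :=
  fun i => if i == j then s else u i.

Lemma vol_step (u : 'I_d -> R) (j : 'I_d) (s t v1 v2 : R) :
  (forall i, in01 (u i)) -> 0 <= s -> s <= t -> t <= 1 ->
  in01 v1 -> in01 v2 -> v1 <= v2 ->
  C (upd u j s) v2 - C (upd u j s) v1 <= C (upd u j t) v2 - C (upd u j t) v1.
Proof.
case: hC => grounded _ _ vol.
move=> u01 s0 st t1 v01 v02 v12.
pose a := fun i => if i == j then s else 0.
pose b := fun i => if i == j then t else u i.
have ab : forall i, in01 (a i) /\ in01 (b i) /\ a i <= b i.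
  move=> i; rewrite /a /b /in01; case: (i == j).
  - by rewrite s0 t1 (le_trans s0 st) (le_trans st t1).
  - by have /andP[-> ->] := u01 i; rewrite lexx ler01.
have := vol a b v1 v2 ab v01 v02 v12.
rewrite /cvolume (bigD1 [set: 'I_d]%SET) //= (bigD1 [set~ j]%SET) /=; last first.
  apply/eqP => /setP /(_ j); by rewrite !inE eqxx.
rewrite big1; last first.
  move=> S /andP[ST SJ].
  have [i /andP[ij iS]] : exists i, (i != j) && (i \notin S).
    apply/existsP; rewrite -[X in is_true X]negbK negb_exists; apply/negP => /forallP H.
    have H' : forall i, i != j -> i \in S.
      by move=> i ij; have := H i; rewrite ij /= negbK.
    case: (boolP (j \in S)) => jS.
    - move/negP: ST; apply; apply/eqP/setP => k; rewrite inE.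
      by case: (eqVneq k j) => [->//|/H'].
    - move/negP: SJ; apply; apply/eqP/setP => k; rewrite !inE.
      by case: (eqVneq k j) => [->|kj]; [rewrite (negbTE jS)|rewrite (H' _ kj)].
  have vin : forall i, in01 (vertex a b S i).
    by move=> k; rewrite /vertex; case: (k \in S); have [? [? ?]] := ab k.
  have ex0 : exists i, vertex a b S i = 0.
    by exists i; rewrite /vertex (negbTE iS) /a (negbTE ij).
  rewrite (grounded _ v1 vin v01 (or_introl ex0)).
  by rewrite (grounded _ v2 vin v02 (or_introl ex0)) subrr mulr0.
have -> : vertex a b [set: 'I_d]%SET = upd u j t.
  by apply/funext => k; rewrite /vertex inE /b /upd.
have -> : vertex a b [set~ j]%SET = upd u j s.
  by apply/funext => k; rewrite /vertex !inE /a /b /upd; case: (k == j).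
rewrite finset.setCT cards0 expr0 mul1r finset.setCK cards1 expr1 addr0 mulN1r subr_ge0.
done.
Qed.

Lemma h_le1 (u : 'I_d -> R) (v1 v2 : R) :
  (forall i, in01 (u i)) -> in01 v1 -> in01 v2 -> v1 <= v2 ->
  C u v2 - C u v1 <= v2 - v1.
Proof.
move=> u01 v01 v02 v12.
pose w k := fun i : 'I_d => if (i < k)%N then 1 else u i.
have w01 : forall k i, in01 (w k i).
  by move=> k i; rewrite /w; case: ifP => // _; rewrite /in01 ler01 lexx.
have key : forall k, C u v2 - C u v1 <= C (w k) v2 - C (w k) v1.
  elim=> [|k IH].
  - have -> : w 0%N = u by apply/funext => i.
    by [].
  - apply: (le_trans IH).
    case: (ltnP k d) => kd; last first.
      have -> : w k.+1 = w k.
        apply/funext => i; rewrite /w.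
        by have := ltn_ord i => id; rewrite (leq_trans id kd) ltnS (ltnW (leq_trans id kd)).
      by [].
    pose j := Ordinal kd.
    have E1 : w k = upd (w k) j (u j).
      apply/funext => i; rewrite /upd /w; case: eqP => // ->.
      by rewrite /= ltnn.
    have E2 : w k.+1 = upd (w k) j 1.
      apply/funext => i; rewrite /upd /w ltnS leq_eqVlt; case: (eqVneq i j) => [->|ij].
      - by rewrite /= eqxx.
      - have -> : (nat_of_ord i == k) = false.
          by apply/negbTE; apply: contra ij => /eqP ik; apply/eqP/val_inj.
        by [].
    rewrite {1 2}E1 E2; apply: vol_step => //.
    + by have /andP[] := u01 j.
    + by have /andP[] := u01 j.
have := key d.
have -> : w d = (fun _ => 1).
  by apply/funext => i; rewrite /w ltn_ord.
case: hC => _ m1 _ _.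
by rewrite !m1.
Qed.

Lemma h_ge0 (u : 'I_d -> R) (v1 v2 : R) : (0 < d)%N ->
  (forall i, in01 (u i)) -> in01 v1 -> in01 v2 -> v1 <= v2 ->
  0 <= C u v2 - C u v1.
Proof.
move=> hd u01 v01 v02 v12.
pose j := Ordinal hd.
have Eu : u = upd u j (u j).
  by apply/funext => i; rewrite /upd; case: eqP => // ->.
have := @vol_step u j 0 (u j) v1 v2 u01 (lexx 0).
have /andP[uj0 uj1] := u01 j.
move=> /(_ uj0 uj1 v01 v02 v12); rewrite -Eu.
case: hC => grounded _ _ _.
have vin : forall i, in01 (upd u j 0 i).
  by move=> i; rewrite /upd; case: eqP => // _; rewrite /in01 lexx ler01.
have ex0 : exists i, upd u j 0 i = 0 by exists j; rewrite /upd eqxx.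
by rewrite !(grounded _ _ vin _ (or_introl ex0)) // subrr.
Qed.

End CopulaLemmas.



Section Key.
Context {R : realType} {dT : measure_display} {T : measurableType dT}
  (P : probability T R) {d : nat} (X : 'I_d -> T -> R) (Y : T -> R)
  (C : ('I_d -> R) -> R -> R) (alpha : 'I_d -> R).
Hypothesis hd : (0 < d)%N.
Hypothesis H : rv_cont_copula P X Y C.
Hypothesis ha : forall i, 0 <= alpha i < 1.

Let a01 : forall i, in01 (alpha i).
Proof. by move=> i; have /andP[a0 a1] := ha i; rewrite /in01 a0 ltW. Qed.

Let VaR_cases : forall i, (alpha i = 0 /\ VaR P (X i) (alpha i) = -oo%E) \/
  0 < alpha i /\ exists q, VaR P (X i) (alpha i) = q%:E /\ Defs.cdf P (X i) q = alpha i.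
Proof.
case: H => [[mX mY] cX cY cop sk] i.
have /andP[a0 a1] := ha i.
case: (eqVneq (alpha i) 0) => [e|ne].
- by left; split => //; rewrite e VaR0.
- have ai0 : 0 < alpha i by rewrite lt_neqAle eq_sym ne a0.
  right; split => //; apply: VaR_fin => //; rewrite a1 andbT //.
Qed.

Let A := VEvent P X alpha.

Let mA : measurable A.
Proof.
case: H => [[mX mY] cX cY cop sk].
have -> : A = \bigcup_(i in [set: 'I_d]) [set t | (VaR P (X i) (alpha i) < (X i t)%:E)%E].
  by apply/seteqP; split => t /= [i]; [exists i | move=> _ h; exists i].
apply: fin_bigcup_measurable; first exact: finite_finset.
move=> i _; case: (VaR_cases i) => [[_ ->]|[_ [q [-> _]]]].
- have -> : [set t | (-oo < (X i t)%:E)%E] = setT.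
    by apply/seteqP; split => t //= _; exact: ltNyr.
  exact: measurableT.
- have -> : [set t | (q%:E < (X i t)%:E)%E] = [set t | q < X i t].
    by apply/seteqP; split => t /=; rewrite lte_fin.
  exact: meas_gt.
Qed.

Let G := Defs.cdf P Y.

Let mY : measurable_fun setT Y.
Proof. by case: H => [[]]. Qed.

Let G01 y : in01 (G y).
Proof. by rewrite /in01 cdf_ge0' cdf_le1'. Qed.

Let compl y : fine (P (~` A `&` [set t | Y t <= y])) = C alpha (G y).
Proof.
case: H => [[mX _] cX cY cop sk].
case: (cop) => grounded _ _ _.
case: (pselect (exists i, alpha i = 0)) => [[i ai]|nai].
- have -> : ~` A `&` [set t | Y t <= y] = set0.
    apply/seteqP; split => t //= [nA _]; apply: nA; exists i.
    case: (VaR_cases i) => [[_ ->]|[ai0 _]]; first exact: ltNyr.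
    by move: ai0; rewrite ai ltxx.
  rewrite measure0 /=.
  by rewrite grounded //; left; exists i.
- have hq : forall i, exists q, VaR P (X i) (alpha i) = q%:E /\ Defs.cdf P (X i) q = alpha i.
    move=> i; case: (VaR_cases i) => [[ai _]|[]//].
    by exfalso; apply: nai; exists i.
  have [q hq'] := choice hq.
  have -> : ~` A `&` [set t | Y t <= y] =
      [set t | (forall i, X i t <= q i) /\ Y t <= y].
    apply/seteqP; split => t /=.
    - move=> [nA yy]; split => // i; rewrite leNgt; apply/negP => lt.
      apply: nA; exists i; by rewrite (hq' i).1 lte_fin.
    - move=> [xq yy]; split => //; move=> [i]; rewrite (hq' i).1 lte_fin ltNge.
      by rewrite xq.
  rewrite sk /=; congr (C _ _).
  by apply/funext => i; rewrite (hq' i).2.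
Qed.

Lemma key_b y :
  fine (P (A `&` [set t | Y t <= y])) = G y - C alpha (G y).
Proof.
have mB := meas_le Y y mY.
have := PrDI P _ _ mB (measurableC mA).
rewrite setDE setCK setIC (setIC _ (~` A)) compl => E.
set c := C alpha (G y) in E *; by rewrite /G /Defs.cdf E addrK.
Qed.

Lemma key_a : fine (P A) = 1 - C alpha 1.
Proof.
case: H => [[mX _] cX cY cop sk].
rewrite -{1}(setCK A) PrC; last exact: measurableC.
congr (1 - _).
set p := fine (P (~` A)).
have [_ lim1] := cdf_lim P Y mY.
have main : forall e, 0 < e -> `|p - C alpha 1| <= e.
  move=> e e0.
  have [y hy] := lim1 (1 - e) ltac:(by rewrite ltrBlDr ltrDl).
  have mB := meas_le Y y mY.
  have mAc := measurableC mA.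
  have E := PrDI P _ _ mAc mB.
  rewrite (setIC (~` A)) in E.
  have Hr : fine (P (~` A `\` [set t | Y t <= y])) <= 1 - G y.
    rewrite /G /Defs.cdf -PrC //; apply: Pr_le.
    - exact: measurableD.
    - exact: measurableC.
    - by move=> t [].
  have Hr0 := Pr_ge0 P (~` A `\` [set t | Y t <= y]).
  rewrite setIC compl in E.
  have h1 := h_le1 C cop _ (G y) 1 a01 (G01 y) (ltac:(by rewrite /in01 ler01 lexx)) (cdf_le1' P Y y mY).
  have h2 := h_ge0 C cop _ (G y) 1 hd a01 (G01 y) (ltac:(by rewrite /in01 ler01 lexx)) (cdf_le1' P Y y mY).
  rewrite -/p in E.
  have hy' : 1 - e < G y := hy.
  rewrite ler_norml; apply/andP; split; lra.
apply/eqP; rewrite -subr_eq0 -normr_le0.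
apply/ler_addgt0Pr => e e0; rewrite add0r; exact: main.
Qed.

End Key.



Theorem theorem4p1 (R : realType) (d : nat) (hd : (0 < d)%N)
  (d1 : measure_display) (T1 : measurableType d1) (P1 : probability T1 R)
  (X1 : 'I_d -> T1 -> R) (Y1 : T1 -> R) (C1 : ('I_d -> R) -> R -> R)
  (d2 : measure_display) (T2 : measurableType d2) (P2 : probability T2 R)
  (X2 : 'I_d -> T2 -> R) (Y2 : T2 -> R) (C2 : ('I_d -> R) -> R -> R)
  (alpha : 'I_d -> R) :
  rv_cont_copula P1 X1 Y1 C1 ->
  rv_cont_copula P2 X2 Y2 C2 ->
  (forall i, 0 <= alpha i < 1) ->
  C1 alpha 1 < 1 -> C2 alpha 1 < 1 ->
  st_le P1 Y1 P2 Y2 ->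
  (forall v : R, 0 < v <= 1 ->
     (v - C1 alpha v) / (v - C2 alpha v) >= (1 - C1 alpha 1) / (1 - C2 alpha 1)) ->
  forall beta : R, 0 < beta < 1 ->
    (VCoVaR P1 X1 Y1 alpha beta <= VCoVaR P2 X2 Y2 alpha beta)%E.
Proof.
move=> H1 H2 ha c1lt c2lt st hl beta /andP[b0 b1].
have a01 : forall i, in01 (alpha i).
  by move=> i; have /andP[a0 a1] := ha i; rewrite /in01 a0 ltW.
have mY1 : measurable_fun setT Y1 by case: H1 => [[]].
have mY2 : measurable_fun setT Y2 by case: H2 => [[]].
have cop1 : is_copula C1 by case: H1.
have cop2 : is_copula C2 by case: H2.
rewrite /VCoVaR /ginv; apply: ereal_inf_le_tmp.
move=> _ [y S2y <-]; exists y => //.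
move: S2y; rewrite /= /cond_cdf (key_a _ _ _ _ _ hd H1 ha) (key_a _ _ _ _ _ hd H2 ha).
rewrite (key_b _ _ _ _ _ H1 ha) (key_b _ _ _ _ _ H2 ha).
set w := Defs.cdf P2 Y2 y.
set z := Defs.cdf P1 Y1 y.
set c1 := 1 - C1 alpha 1.
set c2 := 1 - C2 alpha 1.
move=> S2y.
have c1p : 0 < c1 by rewrite subr_gt0.
have c2p : 0 < c2 by rewrite subr_gt0.
have wz : w <= z.
  have := st y; rewrite !P_gt // lee_fin => h; rewrite /w /z; lra.
have D2ge0 : 0 <= w - C2 alpha w.
  by rewrite -(key_b _ _ _ _ _ H2 ha); exact: Pr_ge0.
have D2gt0 : 0 < w - C2 alpha w.
  rewrite lt_neqAle D2ge0 andbT; apply/eqP => D0.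
  by move: S2y; rewrite -D0 mul0r leNgt b0.
have w01 : in01 w by rewrite /in01 cdf_ge0' cdf_le1'.
have z01 : in01 z by rewrite /in01 cdf_ge0' cdf_le1'.
have w0 : 0 < w.
  rewrite lt_neqAle; have /andP[-> _] := w01; rewrite andbT.
  apply/eqP => w0; move: D2gt0; rewrite -w0.
  case: cop2 => grounded _ _ _.
  by rewrite (grounded _ _ a01) ?subrr ?ltxx //; [rewrite /in01 lexx ler01|right].
have hw := hl w ltac:(by rewrite w0; case/andP: w01).
rewrite -/c1 -/c2 ler_pdivlMr // in hw.
have hm := h_le1 C1 cop1 _ w z a01 w01 z01 wz.
rewrite ler_pdivlMr //.
have h3 : beta * c2 <= w - C2 alpha w by rewrite -ler_pdivlMr.
have h4 : beta * c1 <= c1 / c2 * (w - C2 alpha w).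
  have -> : beta * c1 = (c1 / c2) * (beta * c2).
    by rewrite mulrCA -mulrA mulVf ?mulr1 // gt_eqF.
  by apply: ler_wpM2l => //; rewrite divr_ge0 // ltW.
lra.
Qed.
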